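(* Let $\varphi\in L^\infty(\mathbb{R})\cap S_0(\mathbb{R})$. Then for every $t>0$, $$\|\varphi\|_\infty\le\varphi^*(t)+2\,\omega(\varphi;t),\qquad\text{where }\ \omega(\varphi;t)=\sup_{0\le h\le t}\|\Delta_h\varphi\|_\infty.$$
   Context: $\|\cdot\|_\infty$ is the essential supremum norm on $\mathbb{R}$, and $\Delta_h\varphi(x)=\varphi(x+h)-\varphi(x)$. $S_0(\mathbb{R})$ is the class of measurable, a.e. finite functions $\varphi$ on $\mathbb{R}$ with $|\{x:|\varphi(x)|>s\}|<\infty$ for every $s>0$; $\varphi^*$ is the non-increasing rearrangement of $\varphi$ (the non-negative non-increasing function on $(0,\infty)$ equimeasurable with $|\varphi|$). *)

(* Defs.v *)
From Stdlib Require Import Reals Lra ClassicalEpsilon.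
Open Scope R_scope.

(* Supremum / infimum of a set of reals (0 when the set is empty or
   unbounded in the relevant direction). *)
Definition Rsup (E : R -> Prop) : R :=
  match excluded_middle_informative (bound E /\ exists x, E x) with
  | left H => proj1_sig (completeness E (proj1 H) (proj2 H))
  | right _ => 0
  end.

Definition Rinf (E : R -> Prop) : R := - Rsup (fun x => E (- x)).

(* Lebesgue outer measure of A is <= m: for every eps > 0, A is covered by
   countably many open intervals (a n, b n) of total length <= m + eps. *)
Definition outer_le (A : R -> Prop) (m : R) : Prop :=
  forall eps, 0 < eps ->
    exists a b : nat -> R,
      (forall n, a n <= b n) /\
      (forall x, A x -> exists n, a n < x < b n) /\
      (forall N, sum_f_R0 (fun n => b n - a n) N <= m + eps).

Definition null_set (A : R -> Prop) : Prop := outer_le A 0.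

Definition leb_measurable_set (E : R -> Prop) : Prop :=
  forall (A : R -> Prop) (t : R), outer_le A t ->
    exists t1 t2, t1 + t2 <= t /\
      outer_le (fun x => A x /\ E x) t1 /\
      outer_le (fun x => A x /\ ~ E x) t2.

Definition leb_measurable (f : R -> R) : Prop :=
  forall c, leb_measurable_set (fun x => c < f x).

Definition Linfty (f : R -> R) : Prop :=
  leb_measurable f /\ exists M, null_set (fun x => M < Rabs (f x)).

(* f in S_0(R): measurable, and |{|f| > s}| < infty for all s > 0
   (a.e. finiteness is automatic for real-valued f). *)
Definition S0 (f : R -> R) : Prop :=
  leb_measurable f /\
  forall s, 0 < s -> exists m, outer_le (fun x => s < Rabs (f x)) m.

Definition ess_norm (f : R -> R) : R :=
  Rinf (fun M => 0 <= M /\ null_set (fun x => M < Rabs (f x))).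

Definition rearr (f : R -> R) (t : R) : R :=
  Rinf (fun s => 0 <= s /\ outer_le (fun x => s < Rabs (f x)) t).

Definition Delta (h : R) (f : R -> R) : R -> R := fun x => f (x + h) - f x.

Definition omega (f : R -> R) (t : R) : R :=
  Rsup (fun v => exists h, 0 <= h <= t /\ v = ess_norm (Delta h f)).

(* Main.v *)
Require Import Defs.
From Stdlib Require Import Reals Lra Lia Classical ClassicalEpsilon ZArith.
Open Scope R_scope.

Fixpoint sumN (f : nat -> R) (n : nat) : R :=
  match n with O => 0 | S n' => sumN f n' + f n' end.

Lemma sumN_sum_f f N : sum_f_R0 f N = sumN f (S N).
Proof. induction N; simpl in *; [ring | rewrite IHN; ring]. Qed.

Lemma sumN_ext f g n : (forall i, (i < n)%nat -> f i = g i) -> sumN f n = sumN g n.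
Proof. induction n; intros H; simpl; [reflexivity|]. rewrite IHn by (intros; apply H; lia). rewrite H by lia. reflexivity. Qed.

Lemma sumN_le f g n : (forall i, (i < n)%nat -> f i <= g i) -> sumN f n <= sumN g n.
Proof. induction n; intros H; simpl; [lra|]. assert (sumN f n <= sumN g n) by (apply IHn; intros; apply H; lia). assert (f n <= g n) by (apply H; lia). lra. Qed.

Lemma sumN_nonneg f n : (forall i, 0 <= f i) -> 0 <= sumN f n.
Proof. intros H; induction n; simpl; [lra|]. specialize (H n); lra. Qed.

Lemma sumN_mono f n m : (forall i, 0 <= f i) -> (n <= m)%nat -> sumN f n <= sumN f m.
Proof. intros H Hnm; induction Hnm; [lra|]. simpl. specialize (H m); lra. Qed.

Lemma sumN_plus f g n : sumN (fun i => f i + g i) n = sumN f n + sumN g n.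
Proof. induction n; simpl; [ring|]. rewrite IHn; ring. Qed.

Lemma sumN_split f m n : sumN f (m + n) = sumN f m + sumN (fun i => f (m + i)%nat) n.
Proof. induction n; simpl. rewrite Nat.add_0_r; ring. rewrite Nat.add_succ_r. simpl. rewrite IHn; ring. Qed.

Lemma sumN_exch (f : nat -> nat -> R) K N :
  sumN (fun k => sumN (f k) N) K = sumN (fun n => sumN (fun k => f k n) K) N.
Proof. induction K; simpl. { induction N; simpl; [ring| rewrite <- IHN; ring]. }
  rewrite IHK. rewrite <- sumN_plus. reflexivity. Qed.

Lemma sumN_const c n : sumN (fun _ => c) n = INR n * c.
Proof. induction n; simpl sumN; [simpl; ring|]. rewrite IHn, S_INR; ring. Qed.

Lemma outer_mono (A B : R -> Prop) m : (forall x, A x -> B x) -> outer_le B m -> outer_le A m.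
Proof. intros H HB eps He. destruct (HB eps He) as [a [b [H1 [H2 H3]]]].
  exists a, b; repeat split; auto. Qed.

Lemma outer_le_m A m m' : m <= m' -> outer_le A m -> outer_le A m'.
Proof. intros H HA eps He. destruct (HA eps He) as [a [b [H1 [H2 H3]]]].
  exists a, b; repeat split; auto. intros N; specialize (H3 N); lra. Qed.

Lemma outer_lim A m : (forall e, 0 < e -> outer_le A (m + e)) -> outer_le A m.
Proof. intros H eps He. destruct (H (eps/2) ltac:(lra) (eps/2) ltac:(lra)) as [a [b [H1 [H2 H3]]]].
  exists a, b; repeat split; auto. intros N; specialize (H3 N); lra. Qed.

Lemma outer_nonneg A m : outer_le A m -> 0 <= m.
Proof. intros H. destruct (Rle_lt_dec 0 m) as [h|h]; auto.
  destruct (H (-m/2) ltac:(lra)) as [a [b [H1 [H2 H3]]]]. specialize (H3 O). specialize (H1 O).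
  simpl in H3. lra. Qed.

Lemma outer_empty (A : R -> Prop) : (forall x, ~ A x) -> outer_le A 0.
Proof. intros H eps He. exists (fun _ => 0), (fun _ => 0). split; [|split].
  - intros; lra.
  - intros y Hy; exfalso; exact (H y Hy).
  - intros N. rewrite sumN_sum_f. rewrite (sumN_ext _ (fun _ => 0)) by (intros; ring).
    rewrite sumN_const; lra. Qed.

Lemma outer_shift A m h : outer_le A m -> outer_le (fun x => A (x + h)) m.
Proof. intros H eps He. destruct (H eps He) as [a [b [H1 [H2 H3]]]].
  exists (fun n => a n - h), (fun n => b n - h). repeat split.
  - intros n; specialize (H1 n); lra.
  - intros x Hx. destruct (H2 _ Hx) as [n Hn]. exists n; lra.
  - intros N. specialize (H3 N). rewrite sumN_sum_f in *.
    rewrite (sumN_ext _ (fun n => b n - a n)) by (intros; ring). lra. Qed.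

Fixpoint Tn (j : nat) : nat := match j with O => O | S j' => (Tn j' + S j')%nat end.
Definition nextp (p : nat * nat) : nat * nat :=
  match p with (n, O) => (O, S n) | (n, S k) => (S n, k) end.
Fixpoint pr (i : nat) : nat * nat := match i with O => (O, O) | S i' => nextp (pr i') end.

Lemma pr_S i : pr (S i) = nextp (pr i). Proof. reflexivity. Qed.

Lemma pr_T j n : (n <= j)%nat -> pr (Tn j + n) = (n, (j - n)%nat).
Proof. revert n; induction j as [|j IH]; intros n Hn.
  - assert (n = O) by lia; subst; reflexivity.
  - induction n as [|n IHn].
    + replace (Tn (S j) + 0)%nat with (S (Tn j + j)) by (simpl; lia).
      rewrite pr_S, IH by lia. rewrite Nat.sub_diag. reflexivity.
    + replace (Tn (S j) + S n)%nat with (S (Tn (S j) + n)) by lia.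
      rewrite pr_S, IHn by lia. rewrite (Nat.sub_succ_l n j) by lia. reflexivity.
Qed.

Lemma Tn_ge j : (j <= Tn j)%nat. Proof. induction j; simpl; lia. Qed.

Lemma diag_sum (f : nat -> nat -> R) J :
  sumN (fun i => f (fst (pr i)) (snd (pr i))) (Tn J) = sumN (fun n => sumN (f n) (J - n)) J.
Proof. induction J as [|J IH]; [reflexivity|].
  change (Tn (S J)) with (Tn J + S J)%nat. rewrite sumN_split, IH.
  rewrite (sumN_ext (fun i => f (fst (pr (Tn J + i)%nat)) (snd (pr (Tn J + i)%nat))) (fun n => f n (J - n)%nat)).
  2:{ intros i Hi. rewrite pr_T by lia. reflexivity. }
  change (sumN (fun n => sumN (f n) (S J - n)) (S J)) with
    (sumN (fun n => sumN (f n) (S J - n)) J + sumN (f J) (S J - J)).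
  replace (S J - J)%nat with 1%nat by lia.
  rewrite (sumN_ext (fun n => sumN (f n) (S J - n)) (fun n => sumN (f n) (J - n) + f n (J - n)%nat)).
  2:{ intros i Hi. rewrite (Nat.sub_succ_l i J) by lia. reflexivity. }
  rewrite sumN_plus. simpl. rewrite Nat.sub_diag. ring.
Qed.

Lemma geom J : sumN (fun n => / 2 ^ S n) J = 1 - / 2 ^ J.
Proof. induction J; cbn [sumN]. simpl; field. rewrite IHJ. simpl.
  field. apply pow_nonzero; lra. Qed.

Lemma outer_countable (B : nat -> R -> Prop) (c : nat -> R) (M : R) :
  (forall n, outer_le (B n) (c n)) -> (forall N, sum_f_R0 c N <= M) ->
  outer_le (fun x => exists n, B n x) M.
Proof.
  intros HB Hc eps Heps.
  assert (Hch : forall n, { ab : (nat -> R) * (nat -> R) | (forall k, fst ab k <= snd ab k) /\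
     (forall x, B n x -> exists k, fst ab k < x < snd ab k) /\
     (forall N, sum_f_R0 (fun k => snd ab k - fst ab k) N <= c n + eps / 2 ^ (S n)) }).
  { intro n. apply constructive_indefinite_description.
    destruct (HB n (eps / 2 ^ S n)) as [a [b H]].
    { apply Rdiv_lt_0_compat; [lra | apply pow_lt; lra]. }
    exists (a, b); exact H. }
  set (a := fun n => fst (proj1_sig (Hch n))).
  set (b := fun n => snd (proj1_sig (Hch n))).
  assert (Hab : forall n k, a n k <= b n k) by (intros n k; exact (proj1 (proj2_sig (Hch n)) k)).
  assert (Hcov : forall n x, B n x -> exists k, a n k < x < b n k)
    by (intros n; exact (proj1 (proj2 (proj2_sig (Hch n))))).
  assert (Hsum : forall n K, sumN (fun k => b n k - a n k) K <= c n + eps / 2 ^ S n).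
  { intros n K. destruct K as [|K].
    - pose proof (proj2 (proj2 (proj2_sig (Hch n))) O) as H. rewrite sumN_sum_f in H. cbn [sumN] in H.
      pose proof (Hab n O). unfold a, b in *. cbn [sumN]. lra.
    - rewrite <- sumN_sum_f. exact (proj2 (proj2 (proj2_sig (Hch n))) K). }
  assert (Hc0 : 0 <= c O) by exact (outer_nonneg _ _ (HB O)).
  assert (HcM : forall J, sumN c J <= M).
  { intros [|J]. simpl. specialize (Hc O). simpl in Hc. lra. rewrite <- sumN_sum_f; apply Hc. }
  exists (fun i => a (fst (pr i)) (snd (pr i))), (fun i => b (fst (pr i)) (snd (pr i))).
  split; [|split].
  - intros i; apply Hab.
  - intros x [n Hn]. destruct (Hcov n x Hn) as [k Hk].
    exists (Tn (n + k) + n)%nat. rewrite pr_T by lia. simpl.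
    replace (n + k - n)%nat with k by lia. exact Hk.
  - intros I. rewrite sumN_sum_f.
    set (f := fun n k => b n k - a n k).
    apply Rle_trans with (sumN (fun i => f (fst (pr i)) (snd (pr i))) (Tn (S I))).
    { apply sumN_mono. intros i; unfold f; pose proof (Hab (fst (pr i)) (snd (pr i))); lra.
      apply Tn_ge. }
    rewrite diag_sum.
    apply Rle_trans with (sumN (fun n => c n + eps * / 2 ^ S n) (S I)).
    { apply sumN_le. intros n _. apply Hsum. }
    rewrite sumN_plus.
    assert (sumN (fun n => eps * / 2 ^ S n) (S I) = eps * sumN (fun n => / 2 ^ S n) (S I)).
    { clear. induction (S I); cbn [sumN]; [ring|]. rewrite IHn; ring. }
    rewrite H, geom. specialize (HcM (S I)).
    assert (0 < / 2 ^ S I) by (apply Rinv_0_lt_compat, pow_lt; lra).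
    nra.
Qed.

Lemma outer_union2 A Z m : outer_le A m -> null_set Z -> outer_le (fun x => A x \/ Z x) m.
Proof. intros HA HZ.
  apply outer_mono with (B := fun x => exists n, (fun n => match n with O => A | S O => Z | _ => fun _ => False end) n x).
  { intros x [h|h]; [exists O | exists (S O)]; exact h. }
  apply outer_countable with (c := fun n => match n with O => m | _ => 0 end).
  - intros [|[|n]]; auto. apply outer_empty; auto.
  - intros N. induction N; simpl; [lra|]. lra.
Qed.

Definition lenI a b lo hi := Rmax (Rmax a lo) (Rmin b hi) - Rmax a lo.

Lemma lenI_add a b lo mid hi : a <= b -> lo <= mid <= hi ->
  lenI a b lo mid + lenI a b mid hi = lenI a b lo hi.
Proof. intros. unfold lenI, Rmax, Rmin. repeat destruct Rle_dec; lra. Qed.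

Lemma lenI_le a b lo hi : a <= b -> lenI a b lo hi <= b - a.
Proof. intros. unfold lenI, Rmax, Rmin. repeat destruct Rle_dec; lra. Qed.

Lemma lenI_nonneg a b lo hi : 0 <= lenI a b lo hi.
Proof. unfold lenI, Rmax, Rmin. repeat destruct Rle_dec; lra. Qed.

Lemma lenI_sum a b c l K : a <= b -> 0 < l ->
  sumN (fun k => lenI a b (c + INR k * l) (c + INR (S k) * l)) K = lenI a b c (c + INR K * l).
Proof. intros Hab Hl. induction K; cbn [sumN].
  - simpl. unfold lenI, Rmax, Rmin. repeat destruct Rle_dec; lra.
  - rewrite IHK. apply lenI_add; auto. rewrite S_INR. pose proof (pos_INR K). nra.
Qed.

Lemma ex_common (P : nat -> nat -> Prop) K :
  (forall k N N', (N <= N')%nat -> P k N -> P k N') ->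
  (forall k, (k < K)%nat -> exists N, P k N) -> exists N, forall k, (k < K)%nat -> P k N.
Proof. intros Hm H. induction K.
  - exists O; intros; lia.
  - destruct IHK as [N1 HN1]. { intros; apply H; lia. }
    destruct (H K ltac:(lia)) as [N2 HN2]. exists (Nat.max N1 N2). intros k Hk.
    destruct (Nat.eq_dec k K). subst; apply Hm with N2; auto; lia.
    apply Hm with N1; [lia| apply HN1; lia].
Qed.

Lemma lower_bound A m c l K v : 0 < l -> outer_le A m ->
  (forall k, (k < K)%nat -> ~ outer_le (fun x => A x /\ c + INR k * l < x < c + INR (S k) * l) v) ->
  INR K * v <= m.
Proof.
  intros Hl HA Hk.
  cut (forall eps, 0 < eps -> INR K * v <= m + eps).
  { intros H. destruct (Rle_lt_dec (INR K * v) m); auto.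
    specialize (H ((INR K * v - m)/2) ltac:(lra)). lra. }
  intros eps Heps. destruct (HA eps Heps) as [a [b [H1 [H2 H3]]]].
  set (f := fun k n => lenI (a n) (b n) (c + INR k * l) (c + INR (S k) * l)).
  assert (Hex : forall k, (k < K)%nat -> exists N, v < sumN (f k) N).
  { intros k Hkk. apply NNPP. intros Hn. apply (Hk k Hkk).
    assert (Hall : forall N, sumN (f k) N <= v).
    { intros N. apply Rnot_lt_le. intros Hlt. apply Hn. exists N; exact Hlt. }
    intros eps' He'.
    exists (fun n => Rmax (a n) (c + INR k * l)),
      (fun n => Rmax (Rmax (a n) (c + INR k * l)) (Rmin (b n) (c + INR (S k) * l))).
    split; [|split].
    - intros n. apply Rmax_l.
    - intros x [Ax Ix]. destruct (H2 x Ax) as [n Hn']. exists n. split.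
      + apply Rmax_lub_lt; lra.
      + eapply Rlt_le_trans; [|apply Rmax_r]. apply Rmin_glb_lt; lra.
    - intros N. rewrite sumN_sum_f. specialize (Hall (S N)). unfold f, lenI in Hall. lra. }
  destruct (ex_common (fun k N => v < sumN (f k) N) K) as [N HN].
  { intros k N N' HNN' Hv. eapply Rlt_le_trans; [exact Hv|]. apply sumN_mono; auto.
    intros; apply lenI_nonneg. }
  { exact Hex. }
  apply Rle_trans with (sumN (fun k => sumN (f k) N) K).
  { rewrite <- sumN_const. apply sumN_le. intros k Hkk. left; apply HN; auto. }
  rewrite sumN_exch.
  apply Rle_trans with (sumN (fun n => b n - a n) N).
  { apply sumN_le. intros n _. unfold f. rewrite lenI_sum; auto. apply lenI_le; auto. }
  apply Rle_trans with (sumN (fun n => b n - a n) (S N)).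
  { apply sumN_mono; auto. intros i; specialize (H1 i); lra. }
  rewrite <- sumN_sum_f. apply H3.
Qed.

Lemma sumN_scal k f n : sumN (fun i => k * f i) n = k * sumN f n.
Proof. induction n; cbn [sumN]; [ring|]. rewrite IHn; ring. Qed.

Lemma density E m : outer_le E m -> ~ null_set E ->
  exists c l, 0 < l /\ ~ outer_le (fun x => E x /\ c < x < c + l) (l/2).
Proof.
  intros HE HnE. apply NNPP; intro Hno. apply HnE.
  assert (H : forall c l, 0 < l -> outer_le (fun x => E x /\ c < x < c + l) (l/2)).
  { intros c l Hl. apply NNPP; intro Hc. apply Hno; exists c, l; auto. }
  assert (Step : forall m0 eta, 0 < eta -> outer_le E m0 -> outer_le E ((m0 + eta)/2)).
  { intros m0 eta Heta Hm. destruct (Hm eta Heta) as [a [b [H1 [H2 H3]]]].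
    apply outer_mono with (fun x => exists n, (fun n x => E x /\ a n < x < b n) n x).
    { intros x Ex. destruct (H2 x Ex) as [n Hn]; exists n; auto. }
    apply outer_countable with (c := fun n => (b n - a n)/2).
    - intros n. destruct (Rle_lt_or_eq_dec _ _ (H1 n)).
      + apply outer_mono with (fun x => E x /\ a n < x < a n + (b n - a n)).
        { intros x [? ?]; split; [auto|lra]. }
        apply H; lra.
      + apply outer_le_m with 0. lra. apply outer_empty. intros x [_ ?]; lra.
    - intros N. specialize (H3 N). rewrite sumN_sum_f in *.
      rewrite (sumN_ext _ (fun n => /2 * (b n - a n))) by (intros; field).
      rewrite sumN_scal. lra. }
  pose proof (outer_nonneg _ _ HE) as Hm0.
  assert (Hit : forall j, outer_le E (m * (3/4)^j)).
  { induction j.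
    - simpl. rewrite Rmult_1_r. exact HE.
    - assert (Hq : 0 <= m * (3/4)^j).
      { apply Rmult_le_pos; auto. apply pow_le; lra. }
      replace (m * (3/4)^(S j)) with (m * (3/4)^j * (3/4)) by (simpl; ring).
      set (q := m * (3/4)^j) in *. destruct (Rle_lt_or_eq_dec _ _ Hq) as [Hp|Hz].
      + replace (q * (3/4)) with ((q + q/2)/2) by field. apply Step; auto; lra.
      + rewrite <- Hz. rewrite Rmult_0_l. rewrite Hz. exact IHj. }
  apply outer_lim. intros e He.
  destruct (pow_lt_1_zero (3/4) ltac:(rewrite Rabs_right; lra) (e/(m+1)) ltac:(apply Rdiv_lt_0_compat; lra))
    as [N HN].
  specialize (HN N (le_n N)). rewrite Rabs_right in HN by (apply Rle_ge, pow_le; lra).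
  apply outer_le_m with (m * (3/4)^N); [|apply Hit].
  assert (0 <= (3/4)^N) by (apply pow_le; lra).
  assert ((m+1) * (3/4)^N < e).
  { apply Rmult_lt_compat_l with (r := m+1) in HN; [|lra].
    replace ((m+1) * (e/(m+1))) with e in HN by (field; lra). exact HN. }
  nra.
Qed.

Lemma nat_floor x : 0 <= x -> exists n, INR n <= x < INR n + 1.
Proof.
  intros Hx.
  assert (HN : exists N, x < INR N).
  { destruct (archimed x) as [H1 _]. exists (Z.to_nat (up x)).
    rewrite INR_IZR_INZ. rewrite Z2Nat.id. lra.
    apply Z.lt_le_incl, lt_0_IZR. lra. }
  destruct HN as [N HN]. induction N.
  - simpl in HN; lra.
  - destruct (Rlt_le_dec x (INR N)) as [h|h]; auto.
    exists N; rewrite S_INR in HN; lra.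
Qed.

Lemma core A E t : 0 < t -> outer_le A t -> (forall x, E x -> A x) -> ~ null_set E ->
  (forall h, 0 <= h <= 2 * t -> null_set (fun y => E (y - h) /\ ~ A y)) -> False.
Proof.
  intros Ht HA HEA HnE Hsh.
  destruct (density E t) as [c [l [Hl HF]]]; auto.
  { apply outer_mono with A; auto. }
  destruct (nat_floor (2 * t / l)) as [n [Hn1 Hn2]].
  { apply Rlt_le, Rdiv_lt_0_compat; lra. }
  assert (Hn1' : INR n * l <= 2 * t).
  { apply Rmult_le_compat_r with (r := l) in Hn1; [|lra].
    replace (2 * t / l * l) with (2 * t) in Hn1 by (field; lra). exact Hn1. }
  assert (Hn2' : 2 * t < (INR n + 1) * l).
  { apply Rmult_lt_compat_r with (r := l) in Hn2; [|lra].
    replace (2 * t / l * l) with (2 * t) in Hn2 by (field; lra). exact Hn2. }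
  assert (Hlb : INR (S n) * (l/2) <= t).
  { apply lower_bound with A c l; auto.
    intros k Hk Hout. apply HF.
    assert (Hkn : INR k <= INR n) by (apply le_INR; lia).
    pose proof (pos_INR k).
    assert (Hkl : 0 <= INR k * l <= 2 * t) by (split; nra).
    pose proof (outer_union2 _ _ _ Hout (Hsh _ Hkl)) as HU.
    pose proof (outer_shift _ _ (INR k * l) HU) as HS.
    apply outer_mono with (2 := HS). intros x [Ex Ix]. cbv beta.
    destruct (classic (A (x + INR k * l))) as [Ha|Ha].
    - left. split; auto. rewrite S_INR. lra.
    - right. split; auto. replace (x + INR k * l - INR k * l) with x by ring. exact Ex. }
  rewrite S_INR in Hlb. lra.
Qed.

Lemma Rsup_lub E : bound E -> (exists x, E x) -> is_lub E (Rsup E).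
Proof. intros Hb Hne. unfold Rsup. destruct excluded_middle_informative as [H|H].
  - exact (proj2_sig (completeness E (proj1 H) (proj2 H))).
  - exfalso; apply H; auto. Qed.

Lemma Rinf_spec (E : R -> Prop) : (forall x, E x -> 0 <= x) -> (exists x, E x) ->
  (forall x, E x -> Rinf E <= x) /\ (forall y, Rinf E < y -> exists x, E x /\ x < y) /\ 0 <= Rinf E.
Proof.
  intros Hpos [x0 Hx0]. unfold Rinf.
  assert (Hb : bound (fun x => E (- x))).
  { exists 0. intros z Hz. specialize (Hpos _ Hz). lra. }
  assert (Hne : exists x, E (- x)) by (exists (- x0); rewrite Ropp_involutive; auto).
  destruct (Rsup_lub _ Hb Hne) as [Hub Hlub].
  set (L := Rsup (fun x => E (- x))) in *.
  split; [|split].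
  - intros x Hx. assert (- x <= L) by (apply Hub; rewrite Ropp_involutive; auto). lra.
  - intros y Hy. apply NNPP. intros Hn.
    assert (L <= - y).
    { apply Hlub. intros z Hz. apply Rnot_lt_le. intros Hzy. apply Hn. exists (- z). split; auto. lra. }
    lra.
  - assert (L <= 0). { apply Hlub. intros z Hz. specialize (Hpos _ Hz). lra. } lra.
Qed.

Lemma ess_spec g M1 : 0 <= M1 -> null_set (fun x => M1 < Rabs (g x)) ->
  (forall M, 0 <= M -> null_set (fun x => M < Rabs (g x)) -> ess_norm g <= M) /\
  (forall W, ess_norm g < W -> null_set (fun x => W < Rabs (g x))) /\ 0 <= ess_norm g.
Proof.
  intros H0 Hn. unfold ess_norm.
  destruct (Rinf_spec (fun M => 0 <= M /\ null_set (fun x => M < Rabs (g x)))) as [H1 [H2 H3]].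
  { intros x [? ?]; auto. } { exists M1; auto. }
  split; [|split]; auto.
  intros W HW. destruct (H2 W HW) as [x [[_ Hx] Hxw]].
  apply outer_mono with (2 := Hx). intros y Hy; lra.
Qed.

Lemma abs_split a b M : 2 * M < Rabs (a - b) -> M < Rabs a \/ M < Rabs b.
Proof. intros H. destruct (Rlt_le_dec M (Rabs a)); [left; auto|right].
  revert H r. unfold Rabs; repeat destruct Rcase_abs; intros; lra. Qed.

Lemma abs_chain a b c W K s : Rabs (b - a) <= W -> Rabs (c - b) <= W -> K < Rabs a ->
  Rabs c <= s -> s < K - 2 * W -> False.
Proof. unfold Rabs; repeat destruct Rcase_abs; intros; lra. Qed.

Theorem mainTheorem7 (phi : R -> R) (Hinf : Linfty phi) (HS0 : S0 phi) :
  forall t : R, 0 < t -> ess_norm phi <= rearr phi t + 2 * omega phi t.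
Proof.
  intros t Ht. destruct Hinf as [_ [M0 HM0]].
  set (M1 := Rabs M0).
  assert (HM1p : 0 <= M1) by apply Rabs_pos.
  assert (HM1 : null_set (fun x => M1 < Rabs (phi x))).
  { apply outer_mono with (2 := HM0). intros x Hx. pose proof (Rle_abs M0). unfold M1 in Hx; lra. }
  assert (HD : forall h, null_set (fun x => 2 * M1 < Rabs (Defs.Delta h phi x))).
  { intros h. apply outer_mono with (fun x => M1 < Rabs (phi (x + h)) \/ M1 < Rabs (phi x)).
    { intros x Hx. unfold Defs.Delta in Hx. apply abs_split in Hx. exact Hx. }
    apply outer_union2; auto. apply (outer_shift (fun x => M1 < Rabs (phi x))). exact HM1. }
  assert (HDs : forall h, (forall M, 0 <= M -> null_set (fun x => M < Rabs (Defs.Delta h phi x)) -> ess_norm (Defs.Delta h phi) <= M) /\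
     (forall W, ess_norm (Defs.Delta h phi) < W -> null_set (fun x => W < Rabs (Defs.Delta h phi x))) /\ 0 <= ess_norm (Defs.Delta h phi)).
  { intros h. apply ess_spec with (2 * M1); [lra | apply HD]. }
  set (Som := fun v => exists h, 0 <= h <= t /\ v = ess_norm (Defs.Delta h phi)).
  assert (Hlub : is_lub Som (omega phi t)).
  { unfold omega. apply Rsup_lub.
    - exists (2 * M1). intros v [h [_ ->]]. apply (proj1 (HDs h)). lra. apply HD.
    - exists (ess_norm (Defs.Delta 0 phi)), 0. split; [lra|auto]. }
  set (W := omega phi t) in *.
  assert (HWh : forall h, 0 <= h <= t -> ess_norm (Defs.Delta h phi) <= W).
  { intros h Hh. apply (proj1 Hlub). exists h; auto. }
  assert (HW0 : 0 <= W).
  { apply Rle_trans with (ess_norm (Defs.Delta 0 phi)). apply HDs. apply HWh; lra. }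
  destruct (ess_spec phi M1 HM1p HM1) as [HN1 [HN2 HN3]].
  set (N := ess_norm phi) in *.
  destruct (Rinf_spec (fun s => 0 <= s /\ outer_le (fun x => s < Rabs (phi x)) t)) as [Hr1 [Hr2 Hr3]].
  { intros x [? ?]; auto. }
  { exists M1. split; auto. apply outer_le_m with 0; [lra|exact HM1]. }
  unfold rearr. set (r := Rinf _) in *.
  destruct (Rle_lt_dec N (r + 2 * W)) as [Hok|Hbad]; auto. exfalso.
  set (g := N - r - 2 * W).
  assert (Hg : 0 < g) by (unfold g; lra).
  destruct (Hr2 (r + g/4) ltac:(lra)) as [s [[Hs0 HsA] Hsr]].
  set (W' := W + g/8).
  assert (HZ : forall h, 0 <= h <= t -> null_set (fun x => W' < Rabs (Defs.Delta h phi x))).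
  { intros h Hh. apply (proj1 (proj2 (HDs h))). pose proof (HWh h Hh). unfold W'; lra. }
  assert (HNg : N = r + 2 * W + g) by (unfold g; ring).
  set (E := fun x => N - g/4 < Rabs (phi x)).
  set (A := fun x => s < Rabs (phi x)).
  apply (core A E t Ht HsA).
  - intros x Hx. unfold E, A in *. lra.
  - intros Hn. pose proof (HN1 (N - g/4) ltac:(unfold g; lra) Hn). lra.
  - intros h Hh.
    set (Z := fun x => W' < Rabs (Defs.Delta (h/2) phi x)).
    assert (HZh : null_set Z) by (apply HZ; lra).
    apply outer_mono with (fun y => Z (y + - h) \/ Z (y + - (h/2))).
    2:{ apply outer_union2. apply (outer_shift Z). exact HZh. apply (outer_shift Z). exact HZh. }
    intros y [Ey nAy].
    destruct (classic (Z (y + - h))) as [h1|h1]; [left; auto|].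
    destruct (classic (Z (y + - (h/2)))) as [h2|h2]; [right; auto|].
    exfalso. unfold Z, Defs.Delta, E, A in *.
    apply Rnot_lt_le in h1. apply Rnot_lt_le in h2. apply Rnot_lt_le in nAy.
    replace (y + - h + h/2) with (y + - (h/2)) in h1 by field.
    replace (y + - (h/2) + h/2) with y in h2 by field.
    replace (y - h) with (y + - h) in Ey by ring.
    apply (abs_chain _ _ _ W' (N - g/4) s h1 h2 Ey nAy). unfold W', g in *. lra.
Qed.
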